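(* There exist an infinite topological group $G$, a Hausdorff uniform space $X$, and a continuous action $T: G\times X\to X$ of $G$ on $X$ such that: (1) $T$ is topologically transitive; (2) $T$ is not minimal; (3) the set of periodic points of $T$ is dense in $X$; (4) $T$ does not have sensitive dependence on the initial conditions; (5) $T$ is not equicontinuous.
   Context: A group action of a group $G$ on a set $X$ is a map $T:G\times X\to X$ with $T(r,T(s,x))=T(rs,x)$ for all $r,s\in G$, $x\in X$, and $T(e,x)=x$ for all $x\in X$, where $e$ is the identity of $G$. If $X$ is a topological space, $T$ is called continuous if for each $g\in G$ the map $x\mapsto T(g,x)$ is continuous on $X$. A uniform space is a set $X$ with a uniformity $\mathcal V$ (a family of entourages $U\subseteq X\times X$ containing the diagonal, closed under finite intersections up to refinement, and such that each $U\in\mathcal V$ contains $V\circ V^{-1}$ for some $V\in\mathcal V$), with topology generated by the sets $U[x]=\{y:(x,y)\in U\}$; it is Hausdorff if this topology is. The orbit of $x$ is $Tx=\{T(g,x):g\in G\}$ and the stabilizer is $S_T(x)=\{g\in G: T(g,x)=x\}$. $T$ is topologically transitive if for all nonempty open $Y_1,Y_2\subseteq X$ there is $g\in G$ with $T(g,Y_1)\cap Y_2\neq\emptyset$. $T$ is minimal if $\overline{Tx}=X$ for every $x\in X$. A subset $S\subseteq G$ is right syndetic if there is a compact $K\subseteq G$ with $\bigcup_{k\in K}k^{-1}S=G$, where $k^{-1}S=\{t\in G: kt\in S\}$; a point $x$ is periodic if $S_T(x)$ is right syndetic in $G$. $T$ has sensitive dependence on the initial conditions (is sensitive) if there is an entourage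 $U\in\mathcal V$ such that for every $x\in X$ and every neighbourhood $Y$ of $x$ there are $y\in Y$ and $g\in G$ with $(T(g,x),T(g,y))\notin U$. $T$ is equicontinuous at $x$ if for every entourage $U\in\mathcal V$ there is a neighbourhood $Y$ of $x$ with $T(g,Y)\subseteq U[T(g,x)]$ for all $g\in G$; $T$ is equicontinuous if it is equicontinuous at every point. *)

(* Defs.v *)
From HB Require Import structures.
From mathcomp Require Import all_boot all_order all_algebra.
From mathcomp Require Import all_classical all_reals all_analysis.
Set Implicit Arguments. Unset Strict Implicit. Unset Printing Implicit Defensive.
Local Open Scope classical_set_scope.

Record topGroup := TopGroup {
  tg_car :> topologicalType;
  tg_mul : tg_car -> tg_car -> tg_car;
  tg_inv : tg_car -> tg_car;
  tg_one : tg_car;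
  tg_mulA : forall a b c, tg_mul a (tg_mul b c) = tg_mul (tg_mul a b) c;
  tg_mul1g : forall a, tg_mul tg_one a = a;
  tg_mulg1 : forall a, tg_mul a tg_one = a;
  tg_mulVg : forall a, tg_mul (tg_inv a) a = tg_one;
  tg_mulgV : forall a, tg_mul a (tg_inv a) = tg_one;
  tg_mul_cont : continuous (fun p : tg_car * tg_car => tg_mul p.1 p.2);
  tg_inv_cont : continuous tg_inv
}.

Section Dyn.
Variables (G : topGroup) (X : uniformType) (T : G -> X -> X).

Definition ga_is_action : Prop :=
  (forall r s x, T r (T s x) = T (tg_mul r s) x) /\ (forall x, T (tg_one G) x = x).

Definition ga_continuous : Prop := forall g, continuous (T g).

Definition orbitT (x : X) : set X := [set T g x | g in [set: G]].

Definition ga_stabilizer (x : X) : set G := [set g | T g x = x].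

Definition ga_right_syndetic (S : set G) : Prop :=
  exists K : set G, compact K /\
    \bigcup_(k in K) [set t | S (tg_mul k t)] = [set: G].

Definition periodic_pt (x : X) : Prop := ga_right_syndetic (ga_stabilizer x).

Definition ga_top_transitive : Prop :=
  forall Y1 Y2 : set X, open Y1 -> open Y2 -> Y1 !=set0 -> Y2 !=set0 ->
    exists g, (T g @` Y1) `&` Y2 !=set0.

Definition minimal_act : Prop := forall x, closure (orbitT x) = [set: X].

Definition sensitive_dep : Prop :=
  exists U, entourage U /\
    forall x (Y : set X), nbhs x Y ->
      exists y g, Y y /\ ~ U (T g x, T g y).

Definition ga_equicontinuous_at (x : X) : Prop :=
  forall U, entourage U -> exists Y : set X, nbhs x Y /\
    forall g y, Y y -> U (T g x, T g y).

Definition ga_equicontinuous : Prop := forall x, ga_equicontinuous_at x.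
End Dyn.

(* Main.v *)
Require Import Defs.
From HB Require Import structures.
From mathcomp Require Import all_boot all_order all_algebra.
From mathcomp Require Import all_classical all_reals all_analysis.
From mathcomp Require Import zify.
Set Implicit Arguments. Unset Strict Implicit. Unset Printing Implicit Defensive.
Local Open Scope classical_set_scope.

(* indiscrete group on int *)
Definition Gi : Type := int.
HB.instance Definition _ := Choice.on Gi.

Definition entG : set_system (Gi * Gi) := [set E | setT `<=` E].

Lemma entG_filter : Filter entG.
Proof.
constructor; first by [].
- by move=> P Q HP HQ x _; split; [apply: HP|apply: HQ].
- by move=> P Q PQ HP x _; apply/PQ/HP.
Qed.

Lemma entG_diag A : entG A -> diagonal `<=` A.
Proof. by move=> HA x _; apply: HA. Qed.

Lemma entG_inv A : entG A -> entG (A^-1)%relation.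
Proof. by move=> HA x _; apply: HA. Qed.

Lemma entG_split A : entG A -> exists2 B, entG B & (B \; B `<=` A)%relation.
Proof. by move=> HA; exists A => // x _; apply: HA. Qed.

HB.instance Definition _ := isUniform.Build Gi entG_filter entG_diag entG_inv entG_split.

Lemma nbhsG (x : Gi) (A : set Gi) : nbhs x A -> A = setT.
Proof.
move=> [E HE sub]; apply/seteqP; split => // y _.
by apply: sub; apply/mem_set; apply: HE.
Qed.

Lemma contG (U : topologicalType) (f : U -> Gi) : continuous f.
Proof.
move=> x A /= HA; have := nbhsG HA => ->.
exact: filterT.
Qed.

Definition Gmul (a b : Gi) : Gi := (a + b)%R.
Definition Ginv (a : Gi) : Gi := (- a)%R.

Definition GG : topGroup.
Proof.
refine (@TopGroup Gi Gmul Ginv (0%R : int) _ _ _ _ _ (@contG _ _) (@contG _ _)).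
- by move=> a b c; rewrite /Gmul GRing.addrA.
- by move=> a; rewrite /Gmul GRing.add0r.
- by move=> a; rewrite /Gmul GRing.addr0.
- by move=> a; rewrite /Gmul GRing.addNr.
- by move=> a; rewrite /Gmul GRing.addrN.
Defined.

(* one point compactification of int *)
Definition Xo : Type := option int.
HB.instance Definition _ := Choice.on Xo.

Definition far (N : nat) (x : Xo) : Prop :=
  if x is Some z then (N <= `|z|)%N else True.

Definition DX (N : nat) : set (Xo * Xo) :=
  [set p | p.1 = p.2 \/ (far N p.1 /\ far N p.2)].

Definition entX : set_system (Xo * Xo) := [set E | exists N, DX N `<=` E].

Lemma DXE N a b : DX N (a, b) = (a = b \/ (far N a /\ far N b)).
Proof. by []. Qed.

Lemma far_le N M x : (N <= M)%N -> far M x -> far N x.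
Proof. by case: x => //= z NM; apply: leq_trans. Qed.

Lemma DX_le N M : (N <= M)%N -> DX M `<=` DX N.
Proof.
move=> NM [a b]; rewrite !DXE => -[->|[Ha Hb]]; [by left|right].
by split; [apply: far_le Ha|apply: far_le Hb].
Qed.

Lemma entX_filter : Filter entX.
Proof.
constructor; first by exists 0%N.
- move=> P Q [N HP] [M HQ]; exists (maxn N M) => p Hp; split.
  + by apply: HP; apply: DX_le Hp; apply: leq_maxl.
  + by apply: HQ; apply: DX_le Hp; apply: leq_maxr.
- by move=> P Q PQ [N HP]; exists N => p /HP /PQ.
Qed.

Lemma entX_diag A : entX A -> diagonal `<=` A.
Proof. move=> [N HA] [a b]; rewrite /diagonal /= => ->; apply: HA; by left. Qed.

Lemma entX_inv A : entX A -> entX (A^-1)%relation.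
Proof.
move=> [N HA]; exists N => -[a b] H; apply: HA; rewrite DXE; rewrite /= DXE in H.
by case: H => [->|[]]; [left|right].
Qed.

Lemma entX_split A : entX A -> exists2 B, entX B & (B \; B `<=` A)%relation.
Proof.
move=> [N HA]; exists (DX N); first by exists N.
move=> [a c] [b /= H1 H2]; apply: HA; rewrite DXE; rewrite DXE in H1; rewrite DXE in H2.
case: H1 => [->|[fa fb]]; first by [].
by case: H2 => [<-|[_ fc]]; right; split.
Qed.

HB.instance Definition _ := isUniform.Build Xo entX_filter entX_diag entX_inv entX_split.

Lemma nbhsX_DX (x : Xo) N : nbhs x [set y | DX N (x, y)].
Proof. by exists (DX N) => //; [exists N | move=> y /set_mem]. Qed.

Lemma nbhsX_inv (x : Xo) A : nbhs x A -> exists N, forall y, DX N (x, y) -> A y.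
Proof.
move=> [E [N HE] sub]; exists N => y Hy.
by apply: sub; apply/mem_set; apply: HE.
Qed.

Lemma isolated z : nbhs (Some z : Xo) [set Some z].
Proof.
have := nbhsX_DX (Some z) (`|z|.+1); apply: filterS => y; rewrite /= DXE => -[//|[/= h _]].
move: h; lia.
Qed.

Definition TT (g : GG) (x : Xo) : Xo := omap (fun z => (z + (g : int))%R) x.

Lemma far_shift N (g : int) x : far (N + `|g|) x -> far N (TT g x).
Proof. case: x => //= z; lia. Qed.

Lemma TT_cont g : continuous (TT g).
Proof.
move=> x A /= /nbhsX_inv [N HA].
have := nbhsX_DX x (N + `|(g : int)|); apply: filterS => y; rewrite /= DXE => -[<-|[fx fy]].
  by apply: HA; left.
by apply: HA; right; split; apply: far_shift.
Qed.

Lemma hausX : hausdorff_space Xo.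
Proof.
move=> p q Hc.
case: p Hc => [z|] Hc.
  have [y [/= -> Hy]] := Hc _ _ (isolated z) (nbhsX_DX q (`|z|.+1)).
  move: Hy; rewrite DXE => -[//|[_ /= h]]; move: h; lia.
case: q Hc => [z|] Hc //.
have [y [Hy Hyz]] := Hc _ _ (nbhsX_DX None (`|z|.+1)) (isolated z).
move: Hy; rewrite /= in Hyz; rewrite Hyz /= DXE => -[//|[_ /= h]]; move: h; lia.
Qed.

Lemma open_some (Y : set Xo) : open Y -> Y !=set0 -> exists z, Y (Some z).
Proof.
move=> oY [[z|] Hy]; first by exists z.
have /nbhsX_inv [N HN] : nbhs (None : Xo) Y by move: oY; rewrite openE => /(_ None Hy).
exists (Posz N); apply: HN; rewrite DXE; right; split => //=.
Qed.

Theorem theorem2p1 :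
  exists (G : topGroup) (X : uniformType) (T : G -> X -> X),
    ~ finite_set [set: G] /\
    hausdorff_space X /\
    ga_is_action T /\ ga_continuous T /\
    ga_top_transitive T /\
    ~ minimal_act T /\
    closure [set x | periodic_pt T x] = [set: X] /\
    ~ sensitive_dep T /\
    ~ ga_equicontinuous T.
Proof.
exists GG, Xo, TT.
split.
  move=> fin; apply: infinite_nat.
  have inj : {in (fun n : nat => (Posz n : GG)) @^-1` [set: GG] &, injective (fun n : nat => (Posz n : GG))}.
    by move=> a b _ _ [].
  have := card_ge_preimage inj.
  move/card_le_finite; apply; exact: fin.
split; first exact: hausX.
split.
  split; first by move=> r s [z|] //=; congr Some; rewrite /Gmul; lia.
  by case=> [z|] //=; congr Some; lia.
split; first exact: TT_cont.
split.
  move=> Y1 Y2 o1 o2 n1 n2.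
  have [a Ha] := open_some o1 n1; have [b Hb] := open_some o2 n2.
  exists ((b - a)%R : GG); exists (Some b); split => //.
  by exists (Some a) => //=; congr Some; lia.
split.
  move=> /(_ None) H.
  have : closure (orbitT TT None) (Some 0%R) by rewrite H.
  move=> /(_ _ (isolated 0%R)) [y [[g _ <-] /=]] //.
split.
  apply/seteqP; split => // x _; apply: subset_closure.
  exists [set: GG]; split.
    move=> F PF _; exists (0%R : GG); split => // A B FA /nbhsG ->.
    have [z Hz] := filter_ex FA; by exists z.
  apply/seteqP; split => // t _; exists ((- t)%R : GG) => //.
  by rewrite /ga_stabilizer /=; case: x => [z|] //=; congr Some; rewrite /Gmul; lia.
split.
  move=> [U [entU H]].
  have [y [g [Hy HU]]] := H (Some 0%R) _ (isolated 0%R).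
  by rewrite /= in Hy; subst y; apply: HU; apply: entourage_refl.
move=> /(_ None (DX 1)) [].
  by exists 1%N.
move=> Y [nY HY].
have [N HN] := nbhsX_inv nY.
have H1 : DX N (None, Some (Posz N.+1)) by rewrite DXE; right; split => //=.
have := HY ((- (Posz N.+1))%R : GG) (Some (Posz N.+1)) (HN _ H1).
rewrite /TT /= DXE => -[//|[_ h]]; move: h.
by rewrite /far GRing.addrN.
Qed.
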